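(* Let $\omega_N=(\alpha^{+,(N)},\alpha^{-,(N)},\gamma_1^{(N)},\delta^{(N)})\in\hat\Omega$ and $\omega=(\alpha^+,\alpha^-,\gamma_1,\delta)\in\hat\Omega$, and suppose $\omega_N\to\omega$ coordinate-wise as $N\to\infty$. Then $$\sum_{i\ge1}\left|\alpha_i^{+,(N)}-\alpha_i^+\right|^3\xrightarrow[N\to\infty]{}0,\qquad \sum_{i\ge1}\left|\alpha_i^{-,(N)}-\alpha_i^-\right|^3\xrightarrow[N\to\infty]{}0.$$
   Context: $\hat\Omega$ is the set of $(\alpha^+,\alpha^-,\gamma_1,\delta)$ with $\alpha^\pm=(\alpha_1^\pm\ge\alpha_2^\pm\ge\dots\ge0)$ non-increasing sequences of non-negative reals, $\gamma_1\in\mathbb{R}$, $\delta\ge0$, and $\sum_i(\alpha_i^+)^2+\sum_i(\alpha_i^-)^2\le\delta$. Coordinate-wise convergence means convergence of each $\alpha_i^\pm$, of $\gamma_1$ and of $\delta$. *)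

(* Defs.v *)
From Stdlib Require Import Reals.
From Coquelicot Require Import Coquelicot.
Open Scope R_scope.

(* A non-increasing sequence of non-negative reals, indexed from 0
   (index i here corresponds to alpha_{i+1} in the paper). *)
Definition nonincr_nonneg (a : nat -> R) : Prop :=
  (forall i, 0 <= a i) /\ (forall i, a (S i) <= a i).

Definition in_Omega_hat (ap am : nat -> R) (g1 d : R) : Prop :=
  nonincr_nonneg ap /\ nonincr_nonneg am /\ 0 <= d /\
  ex_series (fun i => (ap i)^2) /\ ex_series (fun i => (am i)^2) /\
  Series (fun i => (ap i)^2) + Series (fun i => (am i)^2) <= d.

(* Main.v *)
Require Import Defs.
From Stdlib Require Import Reals Lra Lia.
From Coquelicot Require Import Coquelicot.
Open Scope R_scope.

Lemma Series_nonneg' (a : nat -> R) :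
  (forall n, 0 <= a n) -> ex_series a -> 0 <= Series a.
Proof.
  intros Ha Ex.
  assert (E : Series (fun _ => 0) = 0).
  { rewrite (Series_ext (fun _ => 0) (fun n => 0 * a n)).
    - rewrite Series_scal_l. ring.
    - intros; ring. }
  rewrite <- E. apply Series_le; auto. intros; split; [lra | auto].
Qed.

Lemma tail_le (a : nat -> R) (n : nat) :
  (forall k, 0 <= a k) -> ex_series a ->
  0 <= Series (fun k => a (S n + k)%nat) <= Series a /\
  0 <= sum_f_R0 a n <= Series a.
Proof.
  intros Ha Ex.
  pose proof (Series_incr_n a (S n) (Nat.lt_0_succ n) Ex) as E.
  simpl Init.Nat.pred in E.
  assert (T : 0 <= Series (fun k => a (S n + k)%nat)).
  { apply Series_nonneg'. intros; apply Ha.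
    apply (ex_series_incr_n a (S n)); auto. }
  assert (P : 0 <= sum_f_R0 a n) by (apply cond_pos_sum; auto).
  lra.
Qed.

Lemma sq_bound (a : nat -> R) (B : R) :
  nonincr_nonneg a -> ex_series (fun i => (a i)^2) ->
  Series (fun i => (a i)^2) <= B -> forall i, INR (S i) * (a i)^2 <= B.
Proof.
  intros [H0 H1] Ex HB i.
  assert (S1 : INR (S i) * (a i)^2 <= sum_f_R0 (fun i => (a i)^2) i).
  { induction i as [|i IH].
    - simpl. lra.
    - rewrite tech5. rewrite S_INR.
      assert (0 <= a (S i) <= a i) by (split; auto).
      assert (a (S i) ^2 <= a i ^2) by nra.
      assert (0 <= INR (S i)) by apply pos_INR.
      assert (INR (S i) * a (S i) ^2 <= INR (S i) * a i ^2) by (apply Rmult_le_compat_l; auto).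
      lra. }
  destruct (tail_le (fun i => (a i)^2) i) as [_ T]; auto.
  intros; apply pow2_ge_0. lra.
Qed.

Lemma small_after (a : nat -> R) (B eta : R) (K : nat) :
  nonincr_nonneg a -> ex_series (fun i => (a i)^2) ->
  Series (fun i => (a i)^2) <= B -> 0 < eta -> B < INR (S K) * eta^2 ->
  forall i, (K <= i)%nat -> a i <= eta.
Proof.
  intros Hn Ex HB He HK i Hi.
  pose proof (sq_bound a B Hn Ex HB i) as Q.
  assert (INR (S K) <= INR (S i)) as I1 by (apply le_INR; lia).
  assert (0 < INR (S K)) as I2 by (apply lt_0_INR; lia).
  destruct Hn as [Hz _]. specialize (Hz i).
  assert (a i ^ 2 < eta ^ 2) by nra.
  nra.
Qed.

Lemma cube_bound (x y e : R) :
  0 <= x <= e -> 0 <= y <= e -> (Rabs (x - y))^3 <= e * (x^2 + y^2).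
Proof.
  intros Hx Hy.
  unfold Rabs; destruct (Rcase_abs (x - y)).
  - assert (0 <= -(x-y) <= e) by lra.
    assert ((-(x-y))^2 <= x^2+y^2) by nra.
    assert (0 <= (-(x-y))^2) by apply pow2_ge_0.
    replace ((-(x-y))^3) with ((-(x-y)) * (-(x-y))^2) by ring. nra.
  - assert (0 <= (x-y) <= e) by lra.
    assert ((x-y)^2 <= x^2+y^2) by nra.
    assert (0 <= (x-y)^2) by apply pow2_ge_0.
    replace ((x-y)^3) with ((x-y) * (x-y)^2) by ring. nra.
Qed.

Lemma head_lim (aN : nat -> nat -> R) (a : nat -> R) :
  (forall i, is_lim_seq (fun N => aN N i) (a i)) ->
  forall n, is_lim_seq (fun N => sum_f_R0 (fun i => (Rabs (aN N i - a i))^3) n) 0.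
Proof.
  intros C.
  assert (T : forall i, is_lim_seq (fun N => (Rabs (aN N i - a i))^3) 0).
  { intros i.
    assert (L : is_lim_seq (fun N => aN N i - a i) (a i - a i)).
    { apply is_lim_seq_minus'; [apply C | apply is_lim_seq_const]. }
    replace (a i - a i) with 0 in L by ring.
    apply is_lim_seq_abs in L. simpl in L. rewrite Rabs_R0 in L.
    assert (M := is_lim_seq_mult' _ _ _ _ L (is_lim_seq_mult' _ _ _ _ L
                    (is_lim_seq_mult' _ _ _ _ L (is_lim_seq_const 1)))).
    replace (0 * (0 * (0 * 1))) with 0 in M by ring.
    exact M. }
  induction n as [|n IH].
  - exact (T 0%nat).
  - pose proof (is_lim_seq_plus' _ _ _ _ IH (T (S n))) as P.
    rewrite Rplus_0_r in P. exact P.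
Qed.

Lemma one_side (aN : nat -> nat -> R) (a : nat -> R) (D : nat -> R) (d : R) :
  (forall N, nonincr_nonneg (aN N)) ->
  (forall N, ex_series (fun i => (aN N i)^2)) ->
  (forall N, Series (fun i => (aN N i)^2) <= D N) ->
  nonincr_nonneg a -> ex_series (fun i => (a i)^2) ->
  Series (fun i => (a i)^2) <= d -> 0 <= d ->
  (forall i, is_lim_seq (fun N => aN N i) (a i)) ->
  is_lim_seq D d ->
  (forall N, ex_series (fun i => (Rabs (aN N i - a i))^3)) /\
  is_lim_seq (fun N => Series (fun i => (Rabs (aN N i - a i))^3)) 0.
Proof.
  intros HnN ExN SN Hn Ex Sd Hd C CD.
  assert (ExC : forall N, ex_series (fun i => (Rabs (aN N i - a i))^3)).
  { intros N.
    apply (@ex_series_le R_AbsRing R_CompleteNormedModule _ (fun i => (aN N 0%nat + a 0%nat) * ((aN N i)^2 + (a i)^2))).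
    - intros i. change (Rabs (Rabs (aN N i - a i) ^ 3) <= (aN N 0%nat + a 0%nat) * (aN N i ^ 2 + a i ^ 2)).
      rewrite Rabs_right.
      2:{ apply Rle_ge. apply pow_le. apply Rabs_pos. }
      destruct (HnN N) as [A0 A1]. destruct Hn as [B0 B1].
      assert (forall (b : nat -> R), (forall i, 0 <= b i) -> (forall i, b (S i) <= b i) ->
                forall i, b i <= b 0%nat).
      { intros b _ Hb. induction i0; [lra|]. specialize (Hb i0). lra. }
      apply cube_bound.
      + split; auto. specialize (H (aN N) A0 A1 i). specialize (B0 0%nat). lra.
      + split; auto. specialize (H a B0 B1 i). specialize (A0 0%nat). lra.
    - apply (ex_series_scal_l (aN N 0%nat + a 0%nat) (fun i => (aN N i)^2 + (a i)^2)).
      apply (ex_series_plus (fun i => (aN N i)^2) (fun i => (a i)^2)); auto. }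
  split; auto.
  apply is_lim_seq_spec. intros eps.
  pose (B := d + 1).
  assert (HB : 0 < B) by (unfold B; lra).
  apply is_lim_seq_spec in CD.
  destruct (CD (mkposreal 1 Rlt_0_1)) as [N0 HN0]. simpl in HN0.
  pose (eta := eps / (4 * B)).
  assert (He : 0 < eta) by (unfold eta; apply Rdiv_lt_0_compat; [apply cond_pos | lra]).
  assert (Hx : 0 <= B / eta^2) by (apply Rcomplements.Rdiv_le_0_compat; [lra | nra]).
  destruct (nfloor_ex _ Hx) as [K [_ HK]].
  assert (HK' : B < INR (S K) * eta^2).
  { rewrite S_INR. assert (0 < eta^2) by nra.
    apply (Rmult_lt_compat_r (eta^2)) in HK; auto.
    unfold Rdiv in HK. rewrite Rmult_assoc, Rinv_l in HK by lra. lra. }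
  pose proof (head_lim aN a C K) as HL.
  apply is_lim_seq_spec in HL.
  assert (He2 : 0 < eps / 2) by (pose proof (cond_pos eps); lra).
  destruct (HL (mkposreal _ He2)) as [N1 HN1]. simpl in HN1.
  exists (max N0 N1). intros N HN.
  specialize (HN0 N ltac:(lia)). specialize (HN1 N ltac:(lia)).
  rewrite Rminus_0_r in HN1 |- *.
  set (c := fun i => (Rabs (aN N i - a i))^3).
  assert (c0 : forall i, 0 <= c i) by (intros; apply pow_le, Rabs_pos).
  pose proof (Series_incr_n c (S K) (Nat.lt_0_succ K) (ExC N)) as E.
  simpl Init.Nat.pred in E.
  assert (SNB : Series (fun i => (aN N i)^2) <= B).
  { specialize (SN N). apply Rabs_def2 in HN0. unfold B. lra. }
  assert (SdB : Series (fun i => (a i)^2) <= B) by (unfold B; lra).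
  assert (sN := small_after (aN N) B eta K (HnN N) (ExN N) SNB He HK').
  assert (sa := small_after a B eta K Hn Ex SdB He HK').
  set (q := fun i => eta * ((aN N i)^2 + (a i)^2)).
  assert (Tle : Series (fun k => c (S K + k)%nat) <= Series (fun k => q (S K + k)%nat)).
  { apply Series_le.
    - intros k. split; auto. unfold c, q. apply cube_bound.
      + split; [apply (proj1 (HnN N)) | apply sN; lia].
      + split; [apply (proj1 Hn) | apply sa; lia].
    - apply (ex_series_incr_n q (S K)).
      apply (ex_series_scal_l eta (fun i => (aN N i)^2 + (a i)^2)).
      apply (ex_series_plus (fun i => (aN N i)^2) (fun i => (a i)^2)); auto. }
  assert (Qe : Series (fun k => q (S K + k)%nat) =
               eta * (Series (fun k => (aN N (S K + k)%nat)^2) + Series (fun k => (a (S K + k)%nat)^2))).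
  { unfold q. rewrite Series_scal_l. f_equal.
    apply Series_plus.
    - apply (ex_series_incr_n (fun i => (aN N i)^2) (S K)); auto.
    - apply (ex_series_incr_n (fun i => (a i)^2) (S K)); auto. }
  destruct (tail_le (fun i => (aN N i)^2) K) as [T1 _]; auto.
  { intros; apply pow2_ge_0. }
  destruct (tail_le (fun i => (a i)^2) K) as [T2 _]; auto.
  { intros; apply pow2_ge_0. }
  destruct (tail_le c K c0 (ExC N)) as [T3 P3].
  assert (eta * (2 * B) = eps / 2) by (unfold eta; field; lra).
  assert (eta * (Series (fun k => (aN N (S K + k)%nat)^2) + Series (fun k => (a (S K + k)%nat)^2)) <= eta * (2*B)).
  { apply Rmult_le_compat_l; lra. }
  assert (0 <= Series c) by lra.
  rewrite Rabs_right by lra.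
  assert (HN1c : Rabs (sum_f_R0 c K) < eps / 2) by exact HN1. rewrite Rabs_right in HN1c by lra.
  lra.
Qed.

Theorem lemma5p3
  (apN amN : nat -> nat -> R) (g1N dN : nat -> R)
  (ap am : nat -> R) (g1 d : R)
  (HN : forall N, in_Omega_hat (apN N) (amN N) (g1N N) (dN N))
  (H : in_Omega_hat ap am g1 d)
  (Cap : forall i, is_lim_seq (fun N => apN N i) (ap i))
  (Cam : forall i, is_lim_seq (fun N => amN N i) (am i))
  (Cg : is_lim_seq g1N g1)
  (Cd : is_lim_seq dN d) :
  ((forall N, ex_series (fun i => (Rabs (apN N i - ap i))^3)) /\
   is_lim_seq (fun N => Series (fun i => (Rabs (apN N i - ap i))^3)) 0) /\
  ((forall N, ex_series (fun i => (Rabs (amN N i - am i))^3)) /\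
   is_lim_seq (fun N => Series (fun i => (Rabs (amN N i - am i))^3)) 0).
Proof.
  destruct H as (Hp & Hm & Hd & Ep & Em & S).
  assert (nn : forall b : nat -> R, ex_series (fun i => (b i)^2) -> 0 <= Series (fun i => (b i)^2)).
  { intros b Eb. apply Series_nonneg'; auto. intros; apply pow2_ge_0. }
  split.
  - apply (one_side apN ap dN d); auto.
    + intros N; apply (HN N).
    + intros N; apply (HN N).
    + intros N. destruct (HN N) as (_ & _ & _ & E1 & E2 & S2).
      pose proof (nn _ E2). lra.
    + pose proof (nn _ Em). lra.
  - apply (one_side amN am dN d); auto.
    + intros N; apply (HN N).
    + intros N; apply (HN N).
    + intros N. destruct (HN N) as (_ & _ & _ & E1 & E2 & S2).
      pose proof (nn _ E1). lra.
    + pose proof (nn _ Ep). lra.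
Qed.
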